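(* For $n\in\mathbb{N}_{\geq1}$ let $\widetilde c(n)$ be the number of rooted binary trees with $n$ leaves and minimal Colless index, and $\widetilde s(n)$ the number of rooted binary trees with $n$ leaves and minimal Sackin index. Then $\widetilde c(n)\leq\widetilde s(n)$.
   Context: A rooted binary tree with $n\geq 2$ leaves is a rooted tree whose root has degree 2 and all other internal nodes have degree 3; for $n=1$ it is a single node; trees are counted up to isomorphism. For a node $u$ let $n_u$ be the number of leaves in the subtree rooted at $u$. The Colless index is $\mathcal{C}(T)=\sum_v|n_{v_1}-n_{v_2}|$ over internal nodes $v$ with children $v_1,v_2$; the Sackin index is $\mathcal{S}(T)=\sum_u n_u$ over internal nodes $u$. Minimality is among all rooted binary trees with $n$ leaves. *)

(* Defs.v *)
From mathcomp Require Import all_boot.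
Set Implicit Arguments. Unset Strict Implicit. Unset Printing Implicit Defensive.

(* Rooted binary trees as ordered (plane) trees; "up to isomorphism" is
   handled by the isomorphism test [tiso] (swapping children). *)
Inductive tree : Type := Leaf | Node of tree & tree.

Fixpoint leaves (t : tree) : nat :=
  match t with Leaf => 1 | Node a b => leaves a + leaves b end.

Fixpoint colless (t : tree) : nat :=
  match t with
  | Leaf => 0
  | Node a b => ((leaves a - leaves b) + (leaves b - leaves a)) + colless a + colless b
  end.

Fixpoint sackin (t : tree) : nat :=
  match t with
  | Leaf => 0
  | Node a b => leaves a + leaves b + sackin a + sackin b
  end.

Fixpoint tiso (t u : tree) : bool :=
  match t, u with
  | Leaf, Leaf => true
  | Node a b, Node c d => (tiso a c && tiso b d) || (tiso a d && tiso b c)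
  | _, _ => false
  end.

(* [trees_f f n]: all ordered trees with n leaves, computed with fuel f
   (fuel f >= n suffices, since subtrees have strictly fewer leaves). *)
Fixpoint trees_f (f n : nat) : seq tree :=
  match f with
  | 0 => [::]
  | f'.+1 =>
      if n == 1 then [:: Leaf]
      else flatten [seq [seq Node a b | a <- trees_f f' i, b <- trees_f f' (n - i)]
                   | i <- iota 1 n.-1]
  end.

Definition trees (n : nat) : seq tree := trees_f n n.

Fixpoint nclasses (s : seq tree) : nat :=
  match s with
  | [::] => 0
  | t :: s' => (if has (tiso t) s' then 0 else 1) + nclasses s'
  end.

Definition min_colless_trees (n : nat) : seq tree :=
  [seq t <- trees n | all (fun t' => colless t <= colless t') (trees n)].

Definition min_sackin_trees (n : nat) : seq tree :=
  [seq t <- trees n | all (fun t' => sackin t <= sackin t') (trees n)].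

Definition ctilde (n : nat) : nat := nclasses (min_colless_trees n).
Definition stilde (n : nat) : nat := nclasses (min_sackin_trees n).

(* Main.v *)
Require Import Defs.
From HB Require Import structures.
From mathcomp Require Import all_boot zify.
Set Implicit Arguments. Unset Strict Implicit. Unset Printing Implicit Defensive.

Fixpoint tree_eqb (t u : tree) : bool :=
  match t, u with
  | Leaf, Leaf => true
  | Node a b, Node c d => tree_eqb a c && tree_eqb b d
  | _, _ => false
  end.

Lemma tree_eqP : Equality.axiom tree_eqb.
Proof.
elim=> [|a IHa b IHb] [|c d] /=; try by constructor.
case: (IHa c) => [->|H]; last by constructor; case.
case: (IHb d) => [->|H]; last by constructor; case.
by constructor.
Qed.

HB.instance Definition _ := hasDecEq.Build tree tree_eqP.

Lemma tiso_refl t : tiso t t.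
Proof. by elim: t => //= a -> b ->. Qed.

Lemma tiso_sym t u : tiso t u = tiso u t.
Proof.
elim: t u => [|a IHa b IHb] [|c d] //=.
rewrite (IHa c) (IHb d) (IHa d) (IHb c).
by case: (tiso c a); case: (tiso d b); case: (tiso d a); case: (tiso c b).
Qed.

Lemma tiso_trans t u v : tiso t u -> tiso u v -> tiso t v.
Proof.
elim: t u v => [|a IHa b IHb] [|c d] [|e f] //=.
case/orP=> /andP[h1 h2]; case/orP=> /andP[h3 h4].
- by rewrite (IHa _ _ h1 h3) (IHb _ _ h2 h4).
- by rewrite (IHa _ _ h1 h3) (IHb _ _ h2 h4) orbT.
- by rewrite (IHa _ _ h1 h4) (IHb _ _ h2 h3) orbT.
- by rewrite (IHa _ _ h1 h4) (IHb _ _ h2 h3).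
Qed.

Fixpoint reps (s : seq tree) : seq tree :=
  match s with
  | [::] => [::]
  | t :: s' => if has (tiso t) s' then reps s' else t :: reps s'
  end.

Lemma nclasses_reps s : nclasses s = size (reps s).
Proof. by elim: s => //= t s ->; case: ifP. Qed.

Lemma reps_sub s : {subset reps s <= s}.
Proof.
elim: s => //= t s IH x; case: ifP => _.
  by move/IH => xs; rewrite inE xs orbT.
by rewrite !inE => /orP[->|/IH ->] //; rewrite orbT.
Qed.

Lemma reps_cover s x : x \in s -> exists2 y, y \in reps s & tiso x y.
Proof.
elim: s x => //= t s IH x; rewrite inE => /orP[/eqP ->|xs].
  case: ifP => H.
    case/hasP: H => z zs tz; case: (IH z zs) => y yr zy.
    by exists y => //; apply: tiso_trans tz zy.
  by exists t; rewrite ?inE ?eqxx ?tiso_refl.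
case: (IH x xs) => y yr xy; exists y => //.
by case: ifP => _ //; rewrite inE yr orbT.
Qed.

Lemma reps_pw s : pairwise (fun x y => ~~ tiso x y) (reps s).
Proof.
elim: s => //= t s IH; case: ifP => H //=.
rewrite IH andbT; apply/allP => y /reps_sub ys.
by apply/negP => ty; move/negP: H; apply; apply/hasP; exists y.
Qed.

Lemma pw_size (l1 l2 : seq tree) :
  pairwise (fun x y => ~~ tiso x y) l1 ->
  (forall x, x \in l1 -> exists2 y, y \in l2 & tiso x y) ->
  size l1 <= size l2.
Proof.
elim: l1 l2 => //= x l1 IH l2 /andP[Hx Hpw] Hc.
case: (Hc x (mem_head _ _)) => y yl2 xy.
have: size l1 <= size (rem y l2).
  apply: IH => // z zl1.
  case: (Hc z); first by rewrite inE zl1 orbT.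
  move=> w wl2 zw; exists w => //; apply: rem_mem => //.
  apply/negP => /eqP E; subst w.
  have: ~~ tiso x z by move/allP: Hx; apply.
  by rewrite tiso_sym (tiso_trans zw) // tiso_sym.
rewrite size_rem //; clear Hc; move: yl2; case: l2 => // w l2' _ /=; lia.
Qed.

Lemma nclasses_le s1 s2 :
  (forall x, x \in s1 -> x \in s2) -> nclasses s1 <= nclasses s2.
Proof.
move=> H; rewrite !nclasses_reps; apply: pw_size; first exact: reps_pw.
by move=> x /reps_sub /H /reps_cover.
Qed.

Lemma leaves_pos t : 0 < leaves t.
Proof. elim: t => //= a Ha b Hb; lia. Qed.

Lemma trees_f_complete t f : leaves t <= f -> t \in trees_f f (leaves t).
Proof.
elim: t f => [|a IHa b IHb] [|f] //=.
  by move=> H; have := leaves_pos a; lia.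
move=> Hf; have := leaves_pos a; have := leaves_pos b => pb pa.
have -> : (leaves a + leaves b == 1) = false by apply/eqP; lia.
apply/flattenP; exists [seq Node x y | x <- trees_f f (leaves a),
                         y <- trees_f f (leaves a + leaves b - leaves a)].
  apply/mapP; exists (leaves a) => //; rewrite mem_iota; lia.
rewrite addKn; apply: allpairs_f; [apply: IHa | apply: IHb]; lia.
Qed.

Lemma trees_f_sound f n t : t \in trees_f f n -> leaves t = n.
Proof.
elim: f n t => [|f IH] n t //=.
case: ifP => [/eqP -> | _]; first by rewrite inE => /eqP ->.
case/flattenP => s /mapP[i]; rewrite mem_iota => Hi -> /allpairsP[[x y] [/= hx hy ->]].
by rewrite /= (IH _ _ hx) (IH _ _ hy); lia.
Qed.

Fixpoint balf (f n : nat) : tree :=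
  match f with
  | 0 => Leaf
  | f'.+1 => if n <= 1 then Leaf else Node (balf f' (uphalf n)) (balf f' n./2)
  end.

Definition bal n := balf n n.

Lemma balf_fuel f g n : n <= f -> n <= g -> balf f n = balf g n.
Proof.
elim: f g n => [|f IH] [|g] n /= Hf Hg.
- by [].
- by have -> : n <= 1 by lia.
- by have -> : n <= 1 by lia.
case: ifP => // H; congr Node; apply: IH; lia.
Qed.

Lemma bal_rec n : 1 < n -> bal n = Node (bal (uphalf n)) (bal n./2).
Proof.
move=> H; rewrite /bal; case: n H => [|n] // H.
change (balf n.+1 n.+1) with
  (if n.+1 <= 1 then Leaf else Node (balf n (uphalf n.+1)) (balf n (n.+1)./2)).
rewrite ifF; last lia.
by congr Node; apply: balf_fuel; lia.
Qed.

Lemma bal_small n : n <= 1 -> bal n = Leaf.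
Proof. by case: n => [|[|]]. Qed.

Lemma leaves_bal n : 0 < n -> leaves (bal n) = n.
Proof.
elim/ltn_ind: n => n IH Hn.
case: (leqP n 1) => H; first by rewrite bal_small //=; lia.
rewrite bal_rec //= !IH; lia.
Qed.

Fixpoint mi (t : tree) : nat :=
  match t with
  | Leaf => 0
  | Node a b => minn (leaves a) (leaves b) + mi a + mi b
  end.

Lemma sackin_colless t : sackin t = colless t + 2 * mi t.
Proof. elim: t => //= a -> b ->; lia. Qed.

Definition sb n := sackin (bal n).
Definition mb n := mi (bal n).

Lemma sb_rec n : 1 < n -> sb n = n + sb (uphalf n) + sb n./2.
Proof.
move=> H; rewrite /sb bal_rec //= !leaves_bal; lia.
Qed.

Lemma mb_rec n : mb n = n./2 + mb (uphalf n) + mb n./2.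
Proof.
case: (leqP n 1) => H.
  rewrite /mb !bal_small /=; lia.
rewrite /mb bal_rec //= !leaves_bal; lia.
Qed.

Lemma sb1 : sb 1 = 0. Proof. by []. Qed.
Lemma mb0 : mb 0 = 0. Proof. by []. Qed.

Lemma sb_convex n : 0 < n -> sb n.+1 + sb n.+1 <= sb n + sb n.+2.
Proof.
elim/ltn_ind: n => n IH Hn.
case: (leqP n 1) => H1.
  have -> : n = 1 by lia.
  rewrite (sb_rec (n:=2)) // (sb_rec (n:=3)) //= (sb_rec (n:=2)) //=.
rewrite (sb_rec (n:=n.+1)) ?(sb_rec (n:=n)) ?(sb_rec (n:=n.+2)) //; try lia.
case/boolP: (odd n) => Ho.
- have E1 : uphalf n.+1 = n./2 + 1 by lia.
  have E2 : (n.+1)./2 = n./2 + 1 by lia.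
  have E3 : uphalf n = n./2 + 1 by lia.
  have E4 : uphalf n.+2 = n./2 + 2 by lia.
  have E5 : (n.+2)./2 = n./2 + 1 by lia.
  rewrite E1 E2 E3 E4 E5.
  have := IH n./2 ltac:(lia) ltac:(lia).
  rewrite !addn1 !addn2; lia.
- have E1 : uphalf n.+1 = n./2 + 1 by lia.
  have E2 : (n.+1)./2 = n./2 by lia.
  have E3 : uphalf n = n./2 by lia.
  have E4 : uphalf n.+2 = n./2 + 1 by lia.
  have E5 : (n.+2)./2 = n./2 + 1 by lia.
  rewrite E1 E2 E3 E4 E5; lia.
Qed.

Lemma sb_mono p q : 0 < p -> p <= q -> sb p.+1 + sb q <= sb p + sb q.+1.
Proof.
move=> Hp Hpq; elim: q Hpq => [|q IH] Hq; first lia.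
case: (leqP p q) => H.
  have := IH H; have := sb_convex (n:=q) ltac:(lia); lia.
have -> : p = q.+1 by lia.
lia.
Qed.

Lemma sb_balance d i j : 0 < i -> i <= j -> j - i <= d ->
  sb (uphalf (i + j)) + sb (i + j)./2 <= sb i + sb j.
Proof.
elim: d i j => [|d IH] i j Hi Hij Hd.
  have -> : j = i by lia.
  have -> : uphalf (i + i) = i by lia.
  have -> : (i + i)./2 = i by lia.
  by [].
case: (leqP (j - i) 1) => H.
  have -> : uphalf (i + j) = j by lia.
  have -> : (i + j)./2 = i by lia.
  lia.
have := IH i.+1 j.-1 ltac:(lia) ltac:(lia) ltac:(lia).
have -> : i.+1 + j.-1 = i + j by lia.
have := sb_mono (p:=i) (q:=j.-1) Hi ltac:(lia).
have -> : (j.-1).+1 = j by lia.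
lia.
Qed.

Lemma sackin_bal_min t : sb (leaves t) <= sackin t.
Proof.
elim: t => [|a IHa b IHb] //=.
have pa := leaves_pos a; have pb := leaves_pos b.
rewrite sb_rec; last lia.
wlog Hab : a b IHa IHb pa pb / leaves a <= leaves b.
  move=> W; case: (leqP (leaves a) (leaves b)) => H; first exact: W.
  have := W b a IHb IHa pb pa ltac:(lia).
  rewrite [leaves b + leaves a]addnC; lia.
have := sb_balance (d := leaves b - leaves a) pa Hab (leqnn _).
lia.
Qed.

Lemma mb_super N a b : a + b <= N -> minn a b + mb a + mb b <= mb (a + b).
Proof.
elim: N a b => [|N IH] a b H.
  have -> : a = 0 by lia. have -> : b = 0 by lia. by rewrite mb0.
case: (posnP a) => [->|Ha]; first by rewrite mb0 add0n; lia.
case: (posnP b) => [->|Hb]; first by rewrite mb0 !addn0; lia.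
have IH' : forall p q r, p + q <= N -> r = p + q ->
    minn p q + mb p + mb q <= mb r by move=> p q r h ->; exact: IH.
rewrite (mb_rec a) (mb_rec b) (mb_rec (a + b)).
case/boolP: (odd a) => Oa; case/boolP: (odd b) => Ob.
- have E1 : uphalf (a + b) = a./2 + b./2 + 1 by lia.
  have E2 : (a + b)./2 = a./2 + b./2 + 1 by lia.
  have E3 : uphalf a = a./2 + 1 by lia.
  have E4 : uphalf b = b./2 + 1 by lia.
  rewrite E1 E2 E3 E4.
  have := IH' (a./2 + 1) b./2 (a./2 + b./2 + 1) ltac:(lia) ltac:(lia).
  have := IH' a./2 (b./2 + 1) (a./2 + b./2 + 1) ltac:(lia) ltac:(lia).
  lia.
- have E1 : uphalf (a + b) = a./2 + b./2 + 1 by lia.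
  have E2 : (a + b)./2 = a./2 + b./2 by lia.
  have E3 : uphalf a = a./2 + 1 by lia.
  have E4 : uphalf b = b./2 by lia.
  rewrite E1 E2 E3 E4.
  have := IH' (a./2 + 1) b./2 (a./2 + b./2 + 1) ltac:(lia) ltac:(lia).
  have := IH' a./2 b./2 (a./2 + b./2) ltac:(lia) ltac:(lia).
  lia.
- have E1 : uphalf (a + b) = a./2 + b./2 + 1 by lia.
  have E2 : (a + b)./2 = a./2 + b./2 by lia.
  have E3 : uphalf a = a./2 by lia.
  have E4 : uphalf b = b./2 + 1 by lia.
  rewrite E1 E2 E3 E4.
  have := IH' a./2 (b./2 + 1) (a./2 + b./2 + 1) ltac:(lia) ltac:(lia).
  have := IH' a./2 b./2 (a./2 + b./2) ltac:(lia) ltac:(lia).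
  lia.
- have E1 : uphalf (a + b) = a./2 + b./2 by lia.
  have E2 : (a + b)./2 = a./2 + b./2 by lia.
  have E3 : uphalf a = a./2 by lia.
  have E4 : uphalf b = b./2 by lia.
  rewrite E1 E2 E3 E4.
  have := IH' a./2 b./2 (a./2 + b./2) ltac:(lia) ltac:(lia).
  lia.
Qed.

Lemma mi_bal_max t : mi t <= mb (leaves t).
Proof.
elim: t => [|a IHa b IHb] //=.
have := mb_super (leqnn (leaves a + leaves b)); lia.
Qed.

Theorem corollary4 (n : nat) : 1 <= n -> ctilde n <= stilde n.
Proof.
move=> Hn; rewrite /ctilde /stilde; apply: nclasses_le => t.
rewrite /min_colless_trees /min_sackin_trees !mem_filter => /andP[/allP Hc Ht].
rewrite Ht andbT; apply/allP => t' Ht'.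
have Lt : leaves t = n by apply: trees_f_sound Ht.
have Lt' : leaves t' = n by apply: trees_f_sound Ht'.
have Hb : bal n \in trees n.
  have := trees_f_complete (t := bal n) (f := n).
  by rewrite leaves_bal //; apply.
have := Hc _ Hb.
have := mi_bal_max t; rewrite Lt => Hm.
have := sackin_bal_min t'; rewrite Lt' /sb => Hs.
rewrite !sackin_colless in Hs *; rewrite /mb in Hm; lia.
Qed.
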